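(* Suppose $p\nmid g(T_1,0)$, i.e. $g(T_1,0)\not\equiv0\pmod p$. Assume that for every finite order character $\psi$ of $\Gamma$ there is an inclusion of ideals $\big(L(T_1,\psi(T_2))\big)\subseteq\big(g(T_1,\psi(T_2))\big)$ in $\mathcal O_\psi[[T_1]]$. Then $\big(L(T_1,T_2)\big)\subseteq\big(g(T_1,T_2)\big)$ in $\mathbb Z_p[[T_1,T_2]]$.
   Context: Let $p$ be an odd prime, $E/\mathbb Q$ an elliptic curve of conductor $N$ with associated newform $f\in S_2(\Gamma_0(N))$, assumed $p$-ordinary, $k$ an imaginary quadratic field, $k_\infty$ the compositum of all $\mathbb Z_p$-extensions of $k$, $G=\mathrm{Gal}(k_\infty/k)\cong\mathbb Z_p^2$, $k^{\mathrm{cyc}}$ and $D_\infty$ the cyclotomic and anticyclotomic $\mathbb Z_p$-extensions, $\Gamma=\mathrm{Gal}(k^{\mathrm{cyc}}/k)$, $\Omega=\mathrm{Gal}(D_\infty/k)$, $H=\mathrm{Gal}(k_\infty/k^{\mathrm{cyc}})$ (which maps isomorphically onto $\Omega$), so that $G=H\times\mathrm{Gal}(k_\infty/D_\infty)$ with $\mathrm{Gal}(k_\infty/D_\infty)$ mapping isomorphically onto $\Gamma$. Fix topological generators $\gamma_1$ of $H$ and $\gamma_2$ of $\mathrm{Gal}(k_\infty/D_\infty)$, and the isomorphism $\Lambda(G)=\mathbb Z_p[[G]]\cong\mathbb Z_p[[T_1,T_2]]$, $\gamma_i\mapsto T_i+1$. $g(T_1,T_2)$ is the image of $\mathrm{char}_{\Lambda(G)}X(E/k_\infty)$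 (characteristic power series of the Pontryagin dual of the $p^\infty$-Selmer group of $E$ over $k_\infty$; taken to be $0$ if it is not torsion), and $L(T_1,T_2)$ is the image of the two-variable $p$-adic $L$-function $L_p(f,k)\in\Lambda(G)$ interpolating the values $L(f\times\Theta(\overline{\mathcal W}),1)/(8\pi^2\langle f,f\rangle_N)$ for finite order characters $\mathcal W$ of $G$. For a finite order character $\psi$ of $\Gamma$ (viewed on $\mathrm{Gal}(k_\infty/D_\infty)$), $\mathcal O_\psi$ is $\mathbb Z_p$ with the values of $\psi$ adjoined and $h(T_1,\psi(T_2))$ denotes the image of $h\in\mathbb Z_p[[T_1,T_2]]$ under $T_2\mapsto\psi(\gamma_2)-1$. *)

(* Defs.v *)
From HB Require Import structures.
From mathcomp Require Import all_boot all_order all_algebra.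
Set Implicit Arguments. Unset Strict Implicit. Unset Printing Implicit Defensive.
Import GRing.Theory.
Local Open Scope ring_scope.

(* Z_p is modelled as the inverse limit of Z/p^(n+1) (level n).
   Z_p[[T1,T2]] = lim_n (Z/p^(n+1))[[T1,T2]]: an element is a family of
   coefficient arrays F n i j (coefficient of T1^i T2^j at level n),
   compatible under reduction. *)

Definition zp_red (p n : nat) (a : 'Z_(p ^ n.+2)) : 'Z_(p ^ n.+1) := inZp (val a).

Definition ps2 (p : nat) := forall n : nat, nat -> nat -> 'Z_(p ^ n.+1).

Definition ps2_compat (p : nat) (F : ps2 p) : Prop :=
  forall n i j, @zp_red p n (F n.+1 i j) = F n i j.

Definition ps2_mul (p : nat) (F G : ps2 p) : ps2 p :=
  fun n i j => \sum_(a < i.+1) \sum_(b < j.+1) F n a b * G n (i - a)%N (j - b)%N.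

Definition ps2_dvd (p : nat) (g L : ps2 p) : Prop :=
  exists H : ps2 p, ps2_compat H /\ forall n i j, L n i j = ps2_mul g H n i j.

(* O_k := Z_p[zeta_{p^k}] = Z_p[X]/(Phi_{p^k}(X)); at level n it is
   (Z/p^(n+1))[X]/(Phi_{p^k}), elements represented by polynomials
   modulo Phi_{p^k}. *)
Definition cyclo_pk (p k n : nat) : {poly 'Z_(p ^ n.+1)} :=
  if k is k'.+1 then \sum_(i < p) 'X^(i * p ^ k') else 'X - 1.

Definition ocong (p k n : nat) (a b : {poly 'Z_(p ^ n.+1)}) : Prop :=
  exists q, a - b = q * cyclo_pk p k n.

Definition pol_red (p n : nat) (q : {poly 'Z_(p ^ n.+2)}) : {poly 'Z_(p ^ n.+1)} :=
  map_poly (@zp_red p n) q.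

(* O_k[[T1]] = lim_n (O_k/p^(n+1))[[T1]] *)
Definition ops (p : nat) := forall n : nat, nat -> {poly 'Z_(p ^ n.+1)}.

Definition ops_compat (p k : nat) (F : ops p) : Prop :=
  forall n i, @ocong p k n (@pol_red p n (F n.+1 i)) (F n i).

Definition ops_mul (p : nat) (F G : ops p) : ops p :=
  fun n i => \sum_(c < i.+1) F n c * G n (i - c)%N.

Definition ops_dvd (p k : nat) (g L : ops p) : Prop :=
  exists H : ops p, ops_compat k H /\
    forall n i, @ocong p k n (L n i) (ops_mul g H n i).

(* h(T1, psi(T2)) for the character psi with psi(gamma_2) = zeta_{p^k}^a
   (zeta_{p^k} = class of X): substitute T2 := X^a - 1.  At level n the
   terms with j >= (n+1) * phi(p^k) vanish (since (zeta-1)^phi(p^k) is in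
   p O_k), so the sum is finite. *)
Definition eval_psi (p k a : nat) (F : ps2 p) : ops p :=
  fun n i => \sum_(j < (n.+1 * totient (p ^ k))%N)
               (F n i j)%:P * ('X^a - 1) ^+ j.

(* Main.v *)
Require Import Defs.
From HB Require Import structures.
From mathcomp Require Import all_boot all_order all_algebra.
Local Open Scope ring_scope.
From HB Require Import structures.
From mathcomp Require Import all_boot all_order all_algebra.
From mathcomp Require Import zify ring lra.
From Stdlib Require Import ClassicalEpsilon.
Set Implicit Arguments. Unset Strict Implicit. Unset Printing Implicit Defensive.
Import GRing.Theory Num.Theory.
Local Open Scope ring_scope.

Section Conv.
Variable R : comNzRingType.
Definition conv (f g : nat -> nat -> R) (i j : nat) : R :=
  \sum_(a < i.+1) \sum_(b < j.+1) f a b * g (i - a)%N (j - b)%N.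

Lemma conv_row0 (f g : nat -> nat -> R) i j :
  (forall i' j', (j' < j)%N -> g i' j' = 0) ->
  conv f g i j = \sum_(a < i.+1) f a 0%N * g (i - a)%N j.
Proof.
move=> H; apply: eq_bigr => a _.
rewrite big_ord_recl /= subn0 big1 ?addr0 // => b _.
rewrite H ?mulr0 //=; have := ltn_ord b; rewrite /bump /=; lia.
Qed.
Lemma convB (f g h : nat -> nat -> R) i j :
  conv f (fun a b => g a b - h a b) i j = conv f g i j - conv f h i j.
Proof.
rewrite /conv -sumrB; apply: eq_bigr => a _; rewrite -sumrB.
by apply: eq_bigr => b _; rewrite mulrBr.
Qed.

Lemma convD (f g h : nat -> nat -> R) i j :
  conv f (fun a b => g a b + h a b) i j = conv f g i j + conv f h i j.
Proof.
rewrite /conv -big_split; apply: eq_bigr => a _; rewrite -big_split.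
by apply: eq_bigr => b _; rewrite mulrDr.
Qed.

Lemma convZ (f g : nat -> nat -> R) c i j :
  conv f (fun a b => c * g a b) i j = c * conv f g i j.
Proof.
rewrite /conv mulr_sumr; apply: eq_bigr => a _; rewrite mulr_sumr.
by apply: eq_bigr => b _; rewrite mulrCA.
Qed.

Lemma conv_ext (f g h : nat -> nat -> R) i j :
  (forall a b, (a <= i)%N -> (b <= j)%N -> g a b = h a b) ->
  conv f g i j = conv f h i j.
Proof.
move=> H; apply: eq_bigr => a _; apply: eq_bigr => b _.
by rewrite H ?leq_subr.
Qed.
Lemma conv_extl (f f' g : nat -> nat -> R) i j :
  (forall a b, (a <= i)%N -> (b <= j)%N -> f a b = f' a b) ->
  conv f g i j = conv f' g i j.
Proof.
move=> H; apply: eq_bigr => a _; apply: eq_bigr => b _.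
by rewrite H // -ltnS.
Qed.
End Conv.

Lemma conv_rmorph (R S : comNzRingType) (phi : {rmorphism R -> S}) f g i j :
  phi (conv f g i j) = conv (fun a b => phi (f a b)) (fun a b => phi (g a b)) i j.
Proof.
rewrite /conv rmorph_sum; apply: eq_bigr => a _; rewrite rmorph_sum.
by apply: eq_bigr => b _; rewrite rmorphM.
Qed.

Lemma fchoice (A B : Type) (P : A -> B -> Prop) :
  (forall a, exists b, P a b) -> exists f : A -> B, forall a, P a (f a).
Proof.
move=> H; exists (fun a => proj1_sig (constructive_indefinite_description _ (H a))).
by move=> a; case: constructive_indefinite_description.
Qed.

Section Dom.
Variable R : idomainType.

Lemma conv1D (g y : nat -> R) d :
  g d != 0 -> (forall a, (a < d)%N -> g a = 0) ->
  (forall i, \sum_(a < i.+1) g a * y (i - a)%N = 0) -> forall i, y i = 0.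
Proof.
move=> gd gl H i; elim/ltn_ind: i => i IH.
have := H (i + d)%N; rewrite (bigD1 (inord d)) /=; last by [].
rewrite inordK ?ltnS ?leq_addl // addnK big1 ?addr0.
  by move/eqP; rewrite mulf_eq0 (negPf gd) /= => /eqP.
move=> a /eqP ad; have [ltad|] := ltnP a d; first by rewrite gl ?mul0r.
rewrite leq_eqVlt => /orP [/eqP da|ltda].
  by case: ad; apply: val_inj; rewrite /= inordK ?ltnS ?leq_addl.
rewrite IH ?mulr0 //.
have := ltn_ord a; lia.
Qed.

Lemma conv_dom (g y : nat -> nat -> R) K :
  (exists d, g d 0%N != 0) ->
  (forall i j, (j < K)%N -> conv g y i j = 0) ->
  forall i j, (j < K)%N -> y i j = 0.
Proof.
case=> d0 gd0 H.
pose d := ex_minn (ex_intro (fun d => g d 0%N != 0) d0 gd0).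
have [gd gl] : g d 0%N != 0 /\ (forall a, (a < d)%N -> g a 0%N = 0).
  rewrite /d; case: ex_minnP => m Hm Hmin; split => // a ha.
  have [//|hh] := eqVneq (g a 0%N) 0; have := Hmin a hh; by rewrite leqNgt ha.

move=> i j; elim/ltn_ind: j i => j IH i hj.
apply: (@conv1D (fun a => g a 0%N) (fun i => y i j) d gd gl) => i'.
rewrite -conv_row0 ?H // => i'' j' hj'.
by apply: IH => //; apply: ltn_trans hj.
Qed.

Lemma level0 (g L : nat -> nat -> R) :
  (exists d, g d 0%N != 0) ->
  (forall K, exists y, forall i j, (j < K)%N -> L i j = conv g y i j) ->
  exists y, forall i j, L i j = conv g y i j.
Proof.
move=> hg H.
pose Y K := proj1_sig (constructive_indefinite_description _ (H K)).
have HY K i j : (j < K)%N -> L i j = conv g (Y K) i j.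
  by rewrite /Y; case: constructive_indefinite_description => y /= Hy; apply: Hy.
have agree K1 K2 i j : (j < K1)%N -> (j < K2)%N -> Y K1 i j = Y K2 i j.
  move=> h1 h2; apply/eqP; rewrite -subr_eq0; apply/eqP.
  apply: (conv_dom (y := fun a b => Y K1 a b - Y K2 a b) (K := minn K1 K2) hg) => [i' j' hj'|].
    rewrite convB -!HY ?subrr //; move: hj'; rewrite leq_min => /andP[] //.
  by rewrite leq_min h1 h2.
exists (fun i j => Y j.+1 i j) => i j.
rewrite (HY j.+1) //; apply: conv_ext => a b _ hb.
by apply: agree; rewrite ltnS.
Qed.
End Dom.
Section ZmodInt.
Variable m : nat.
Hypothesis m_gt1 : (1 < m)%N.

Lemma Zint_eq0 (z : int) : ((z%:~R : 'Z_m) == 0) = (m%:Z %| z)%Z.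
Proof.
case: z => n.
  by rewrite -pmulrn -(inj_eq val_inj) /= val_Zp_nat.
rewrite NegzE mulrNz oppr_eq0 -pmulrn -(inj_eq val_inj) /= val_Zp_nat //.
Qed.

Definition toI (x : 'Z_m) : int := (val x)%:Z.

Lemma toIK (x : 'Z_m) : (toI x)%:~R = x.
Proof. by rewrite /toI -pmulrn natr_Zp. Qed.

Lemma Zint_eq (a b : int) : ((a%:~R : 'Z_m) = b%:~R) <-> (m%:Z %| a - b)%Z.
Proof.
rewrite -Zint_eq0 rmorphB /= subr_eq0; split; [by move=> ->|by move/eqP].
Qed.

Definition liftP (P : {poly 'Z_m}) : {poly int} := map_poly toI P.

Lemma liftPK P : map_poly (intr : int -> 'Z_m) (liftP P) = P.
Proof.
apply/polyP => i; rewrite coef_map /= /liftP coef_map_id0 ?toIK //.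
Qed.

Lemma ker_map (D : {poly int}) :
  map_poly (intr : int -> 'Z_m) D = 0 -> exists R, D = m%:R * R.
Proof.
move=> HD; exists (\poly_(i < size D) (D`_i %/ m%:Z)%Z).
apply/polyP => i; rewrite mulr_natl coefMn coef_poly.
have hi : (m%:Z %| D`_i)%Z.
  have := congr1 (fun P : {poly 'Z_m} => P`_i) HD.
  by rewrite coef_map coef0 /= -Zint_eq0 => ->.
case: ifP => hs; last by rewrite mul0rn nth_default // leqNgt hs.
by rewrite -mulr_natr natz divzK.
Qed.
End ZmodInt.

Section Cyclo.
Variables (p k : nat).
Hypothesis hp : prime p.

Definition Phi : {poly int} := \sum_(i < p) 'X^(i * p ^ k).
Definition phi : nat := (p.-1 * p ^ k)%N.

Definition Iin (m : nat) (A : {poly int}) :=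
  exists U V : {poly int}, A = U * Phi + (p ^ m)%:R * V.

Lemma Iin0 m : Iin m 0.
Proof. by exists 0, 0; rewrite !mul0r mulr0 addr0. Qed.

Lemma IinD m A B : Iin m A -> Iin m B -> Iin m (A + B).
Proof.
move=> [U [V ->]] [U' [V' ->]]; exists (U + U'), (V + V'); ring.
Qed.

Lemma IinN m A : Iin m A -> Iin m (- A).
Proof. move=> [U [V ->]]; exists (- U), (- V); ring. Qed.

Lemma IinB m A B : Iin m A -> Iin m B -> Iin m (A - B).
Proof. by move=> hA hB; apply: IinD => //; apply: IinN. Qed.

Lemma IinMr m A C : Iin m A -> Iin m (A * C).
Proof. move=> [U [V ->]]; exists (U * C), (V * C); ring. Qed.

Lemma IinMl m A C : Iin m A -> Iin m (C * A).
Proof. by rewrite mulrC; apply: IinMr. Qed.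

Lemma IinPhi m C : Iin m (Phi * C).
Proof. by exists C, 0; rewrite mulr0 addr0 mulrC. Qed.

Lemma Iinp m C : Iin m ((p ^ m)%:R * C).
Proof. by exists 0, C; rewrite mul0r add0r. Qed.

Lemma Iin_le m m' A : (m <= m')%N -> Iin m' A -> Iin m A.
Proof.
move=> hm [U [V ->]]; exists U, ((p ^ (m' - m))%:R * V).
by rewrite mulrA -natrM -expnD subnKC.
Qed.

Lemma Iin_sum m (I : finType) (F : I -> {poly int}) :
  (forall i, Iin m (F i)) -> Iin m (\sum_i F i).
Proof.
move=> H; apply: (big_ind (Iin m)) => //; [exact: Iin0|exact: IinD].
Qed.

Lemma Phi_monic : Phi \is monic.
Proof.
have hp0 := prime_gt0 hp.
have E : ('X^(p ^ k) - 1) * Phi = 'X^(p ^ k.+1) - 1 :> {poly int}.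
  rewrite /Phi (expnS p k) (mulnC p) exprM [RHS]subrX1; congr (_ * _).
  by apply: eq_bigr => i _; rewrite -exprM mulnC.
have hpk : (0 < p ^ k.+1)%N by rewrite expn_gt0 hp0.
have := monic_Xn_sub_1 int hpk; rewrite -E.
by rewrite monicMl // monic_Xn_sub_1 // expn_gt0 hp0.
Qed.

Lemma Iin_cancel m r A : Iin (m + r) ((p ^ m)%:R * A) -> Iin r A.
Proof.
move=> [U [V E]].
have Hm := Phi_monic.
have pm0 : ((p ^ m)%:R : {poly int}) != 0.
  by rewrite -polyC_natr polyC_eq0 pnatr_eq0 expn_eq0 negb_and -lt0n (prime_gt0 hp).
have Phi0 : Phi != 0 by apply: monic_neq0.
have eA := Pdiv.IdomainMonic.divp_eq Hm A.
have eV := Pdiv.IdomainMonic.divp_eq Hm V.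
set aq := A %/ Phi in eA; set ar := A %% Phi in eA.
set vq := V %/ Phi in eV; set vr := V %% Phi in eV.
have hsa : (size ar < size Phi)%N by rewrite ltn_modp.
have hsv : (size vr < size Phi)%N by rewrite ltn_modp.
have E2 : (p ^ m)%:R * ar - (p ^ (m + r))%:R * vr =
          (U + (p ^ (m + r))%:R * vq - (p ^ m)%:R * aq) * Phi.
  rewrite eA eV in E; apply/eqP; rewrite -subr_eq0; apply/eqP.
  have : (p ^ m)%:R * (aq * Phi + ar) - (U * Phi + (p ^ (m + r))%:R * (vq * Phi + vr)) = 0.
    by rewrite E subrr.
  by move=> <-; ring.
set Q := (U + _ - _) in E2.
have sc (c : nat) (B : {poly int}) : (size ((c%:R * B)%R) <= size B)%N.
  by rewrite -polyC_natr mul_polyC size_scale_leq.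
have Q0 : Q = 0.
  apply/eqP; apply: contraT => hQ.
  have := congr1 (fun P : {poly int} => size P) E2; rewrite /= size_Mmonic //.
  move=> h; have := size_add ((p ^ m)%:R * ar) (- ((p ^ (m + r))%:R * vr)).
  rewrite size_opp h => hmax.
  have := sc (p ^ m)%N ar; have := sc (p ^ (m + r))%N vr.
  have : (0 < size Q)%N by rewrite size_poly_gt0.
  move: hmax; rewrite /maxn; case: ifP => _ hmax hq h1 h2.
    have hv := leq_ltn_trans (leq_trans hmax h1) hsv.
    by move: hv hq; case: (size Q) => //= n; rewrite ltnNge leq_addl.
  have hv := leq_ltn_trans (leq_trans hmax h2) hsa.
  by move: hv hq; case: (size Q) => //= n; rewrite ltnNge leq_addl.
rewrite Q0 mul0r in E2.
move/eqP: E2; rewrite subr_eq0 expnD natrM -mulrA => /eqP /(mulfI pm0) ear.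
by exists aq, vr; rewrite eA ear.
Qed.
End Cyclo.

Section Frob.
Variables (p k : nat).
Hypothesis hp : prime p.
Local Notation Phi := (Phi p k).
Local Notation phi := (phi p k).
Local Notation Fp := 'F_p.
Local Notation mF := (map_poly (intr : int -> 'F_p)).

Lemma Fp_pchar_poly : p \in [pchar {poly 'F_p}].
Proof. by rewrite pchar_poly pchar_Fp. Qed.

Lemma frobXn e (x y : {poly 'F_p}) : (x + y) ^+ (p ^ e) = x ^+ (p ^ e) + y ^+ (p ^ e).
Proof.
apply: exprDn_pchar; rewrite pnatX pnatE //; apply/orP; left.
exact: Fp_pchar_poly.
Qed.

Lemma mPhi : mF Phi = \sum_(i < p) 'X^(i * p ^ k).
Proof. by rewrite /Phi rmorph_sum /=; apply: eq_bigr => i _; rewrite map_polyXn. Qed.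

Lemma PhiF : mF Phi \Po ('X + 1) = 'X^phi.
Proof.
rewrite mPhi.
set Z : {poly 'F_p} := 'X^(p ^ k).
have eS : (\sum_(i < p) 'X^(i * p ^ k)) \Po ('X + 1) = \sum_(i < p) (Z + 1) ^+ i.
  rewrite (raddf_sum (comp_poly ('X + 1))) /=; apply: eq_bigr => i _.
  rewrite mulnC exprM !rmorphXn /= comp_polyX frobXn expr1n.
  done.
rewrite eS.
have Z0 : Z != 0 by rewrite /Z expf_neq0 // polyX_eq0.
apply: (mulfI Z0).
have : (Z + 1) ^+ p - 1 = Z * \sum_(i < p) (Z + 1) ^+ i.
  by rewrite subrX1 addrK.
move <-.
have h1 := frobXn 1 Z 1; rewrite expn1 in h1; rewrite h1 expr1n addrK.
rewrite /phi /Z -!exprM -exprD; congr ('X^_).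
have := prime_gt0 hp; case: p => // q _ /=; rewrite mulnS mulnC; ring.
Qed.

Lemma hpd : (1 < pdiv p)%N.
Proof. by rewrite pdiv_id // prime_gt1. Qed.

Lemma mFXD (c : int) : mF ('X + c%:P) = 'X + (c%:~R)%:P.
Proof. by rewrite rmorphD /= map_polyX map_polyC. Qed.

Lemma mFcomp (A B : {poly int}) : mF (A \Po B) = mF A \Po mF B.
Proof. exact: map_comp_poly. Qed.

Lemma mFp : mF (p%:R) = 0.
Proof. by rewrite rmorph_nat -polyC_natr (pchar_Fp_0 hp). Qed.

Lemma bridgeF A : Iin p k 1 A -> forall j, (j < phi)%N -> (mF (A \Po ('X + 1)))`_j = 0.
Proof.
move=> [U [V ->]] j hj.
rewrite mFcomp rmorphD /= map_polyX rmorph1.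
rewrite (rmorphD mF) !(rmorphM mF) /= expn1 mFp mul0r addr0.
by rewrite comp_polyM PhiF coefMXn hj.
Qed.

Lemma mFX1 : mF ('X + 1) = 'X + 1.
Proof. by rewrite rmorphD /= map_polyX rmorph1. Qed.

Lemma compK1 (A : {poly int}) : (A \Po ('X + 1)) \Po ('X - 1) = A.
Proof. by have := comp_polyXaddC_K A 1; rewrite polyC1. Qed.

Lemma bridgeB A : (forall j, (j < phi)%N -> (mF (A \Po ('X + 1)))`_j = 0) -> Iin p k 1 A.
Proof.
move=> H; set B := mF (A \Po ('X + 1)).
have tk : take_poly phi B = 0.
  by apply/polyP => j; rewrite coef_take_poly coef0; case: ifP => // /H.
have eB : B = drop_poly phi B * 'X^phi by rewrite -{1}(poly_take_drop phi B) tk add0r.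
set W := liftP (drop_poly phi B).
have : mF (A \Po ('X + 1) - (Phi \Po ('X + 1)) * W) = 0.
  rewrite rmorphB rmorphM /= -/B mFcomp mFX1 liftPK PhiF {1}eB mulrC subrr //.
move/(ker_map hpd) => [R hR]; rewrite (pdiv_id hp) in hR.
exists (W \Po ('X - 1)), (R \Po ('X - 1)).
rewrite -{1}(compK1 A); move/eqP: hR; rewrite subr_eq => /eqP ->.
by rewrite comp_polyD !comp_polyM compK1 -polyC_natr comp_polyC polyC_natr addrC mulrC.
Qed.

Lemma PhiZ : exists W, ('X - 1) ^+ phi = Phi + p%:R * W.
Proof.
have : mF (('X - 1) ^+ phi - Phi) = 0.
  rewrite rmorphB rmorphXn /= rmorphB /= map_polyX rmorph1.
  have := congr1 (fun P => P \Po ('X - 1)) PhiF.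
  rewrite -comp_polyA comp_polyD comp_polyX comp_polyC subrK comp_polyXr /=.
  rewrite rmorphXn /= comp_polyX => ->; exact: subrr.
move/(ker_map hpd) => [W hW]; exists W.
by rewrite (pdiv_id hp) in hW; rewrite -hW addrCA subrr addr0.
Qed.
End Frob.

Lemma coef_convP (R : comNzRingType) (P Q : nat -> {poly R}) i j :
  (\sum_(c < i.+1) P c * Q (i - c)%N)`_j =
  conv (fun a b => (P a)`_b) (fun a b => (Q a)`_b) i j.
Proof.
rewrite coef_sum; apply: eq_bigr => c _; exact: coefM.
Qed.

Section Ev.
Variables (p k : nat).
Hypothesis hp : prime p.
Local Notation Phi := (Phi p k).
Local Notation phi := (phi p k).
Local Notation mF := (map_poly (intr : int -> 'F_p)).

Definition Pol (B : nat) (F : nat -> nat -> int) (i : nat) : {poly int} :=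
  \poly_(j < B) F i j.
Definition Ev B F i := Pol B F i \Po ('X - 1).

Lemma IinXN N : Iin p k N (('X - 1) ^+ (N * phi)).
Proof.
have [W hW] := PhiZ k hp.
elim: N => [|N [U [V IH]]]; first by exists 0, 1; rewrite mul0n expr0 mul0r add0r expn0 mulr1.
rewrite mulSn exprD hW IH.
exists (U * Phi + U * p%:R * W + (p ^ N)%:R * V), (V * W).
rewrite expnS natrM; ring.
Qed.

Lemma PolM B F G i : exists W,
  Pol B (conv F G) i - \sum_(c < i.+1) Pol B F c * Pol B G (i - c)%N = W * 'X^B.
Proof.
set D := _ - _; exists (drop_poly B D).
rewrite -{1}(poly_take_drop B D).
suff -> : take_poly B D = 0 by rewrite add0r.
apply/polyP => j; rewrite coef_take_poly coef0; case: ifP => // hj.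
rewrite /D coefB coef_convP /Pol coef_poly hj.
apply/eqP; rewrite subr_eq0; apply/eqP; apply: eq_bigr => a _; apply: eq_bigr => b _.
rewrite !coef_poly !ifT //; have := ltn_ord b; lia.
Qed.

Lemma EvM N F G i :
  Iin p k N (Ev (N * phi) (conv F G) i -
             \sum_(c < i.+1) Ev (N * phi) F c * Ev (N * phi) G (i - c)%N).
Proof.
have [W hW] := PolM (N * phi) F G i.
have -> : Ev (N * phi) (conv F G) i - \sum_(c < i.+1) Ev (N * phi) F c * Ev (N * phi) G (i - c)%N
   = (Pol (N * phi) (conv F G) i - \sum_(c < i.+1) Pol (N * phi) F c * Pol (N * phi) G (i - c)%N)
      \Po ('X - 1).
  rewrite comp_polyB rmorph_sum /=; congr (_ - _); apply: eq_bigr => c _.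
  by rewrite comp_polyM.
rewrite hW comp_polyM rmorphXn /= comp_polyX; apply: IinMl; exact: IinXN.
Qed.

Lemma EvD B F G i : Ev B (fun a b => F a b + G a b) i = Ev B F i + Ev B G i.
Proof.
rewrite /Ev -comp_polyD; congr (_ \Po _); apply/polyP => j.
by rewrite coefD !coef_poly; case: ifP; rewrite ?addr0.
Qed.

Lemma EvZ B c F i : Ev B (fun a b => c * F a b) i = c%:P * Ev B F i.
Proof.
rewrite /Ev -(comp_polyC c ('X - 1)) -comp_polyM; congr (_ \Po _); apply/polyP => j.
by rewrite coefCM !coef_poly; case: ifP; rewrite ?mulr0.
Qed.

Lemma EvX1 B F i : Ev B F i \Po ('X + 1) = Pol B F i.
Proof.
rewrite /Ev -comp_polyA comp_polyB comp_polyX comp_polyC addrK comp_polyXr //.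
Qed.
End Ev.

Section Core.
Variables (p k : nat).
Hypothesis hp : prime p.
Local Notation Phi := (Phi p k).
Local Notation phi := (phi p k).
Local Notation Iin := (Iin p k).
Local Notation mF := (map_poly (intr : int -> 'F_p)).
Variable g : nat -> nat -> int.
Local Notation gb := (fun a b => ((g a b)%:~R : 'F_p)).
Hypothesis hg0 : exists d, gb d 0%N != 0.

Lemma Iin_fun m (Y : nat -> {poly int}) : (forall i, Iin m (Y i)) ->
  exists U V : nat -> {poly int}, forall i, Y i = U i * Phi + (p ^ m)%:R * V i.
Proof.
move=> H.
have H' : forall i, exists uv : {poly int} * {poly int},
   Y i = uv.1 * Phi + (p ^ m)%:R * uv.2.
  by move=> i; case: (H i) => U [V h]; exists (U, V).
have [f hf] := fchoice H'.
by exists (fun i => (f i).1), (fun i => (f i).2).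
Qed.

Lemma transfer B (Y : nat -> {poly int}) i j : (j < B)%N ->
  (mF ((\sum_(c < i.+1) Ev B g c * Y (i - c)%N) \Po ('X + 1)))`_j =
  conv gb (fun a b => (mF (Y a \Po ('X + 1)))`_b) i j.
Proof.
move=> hj.
rewrite (raddf_sum (comp_poly ('X + 1))) rmorph_sum /=.
under eq_bigr => c _ do rewrite comp_polyM EvX1 rmorphM /=.
rewrite (coef_convP (fun c => mF (Pol B g c)) (fun a => mF (Y a \Po ('X + 1)))).
apply: conv_extl => a b _ hb.
by rewrite coef_map /= coef_poly ifT //; apply: leq_ltn_trans hj.
Qed.

Lemma nzd1 B (Y : nat -> {poly int}) : (phi <= B)%N ->
  (forall i, Iin 1 (\sum_(c < i.+1) Ev B g c * Y (i - c)%N)) -> forall i, Iin 1 (Y i).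
Proof.
move=> hB H i; apply: (bridgeB hp) => j hj.
apply: (conv_dom (g := gb) (y := fun a b => (mF (Y a \Po ('X + 1)))`_b) (K := phi) hg0) => //.
move=> i' j' hj'; rewrite -(@transfer B Y i' j'); last by apply: leq_trans hB.
exact: (bridgeF hp (H i')).
Qed.

Lemma nzd B m (Y : nat -> {poly int}) : (phi <= B)%N ->
  (forall i, Iin m (\sum_(c < i.+1) Ev B g c * Y (i - c)%N)) -> forall i, Iin m (Y i).
Proof.
move=> hB; elim: m Y => [|m IH] Y H.
  by move=> i; exists 0, (Y i); rewrite mul0r add0r expn0 mul1r.
have Hm : forall i, Iin m (Y i).
  by apply: IH => i; apply: (Iin_le (leqnSn m)).
have [U [V eY]] := Iin_fun Hm.
have HV : forall i, Iin 1 (\sum_(c < i.+1) Ev B g c * V (i - c)%N).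
  move=> i; apply: (@Iin_cancel p k hp m 1); rewrite addn1.
  have -> : (p ^ m)%:R * (\sum_(c < i.+1) Ev B g c * V (i - c)%N) =
    \sum_(c < i.+1) Ev B g c * Y (i - c)%N - Phi * \sum_(c < i.+1) Ev B g c * U (i - c)%N.
    rewrite !mulr_sumr -sumrB; apply: eq_bigr => c _; rewrite eY; ring.
  by apply: IinB => //; apply: IinPhi.
have := nzd1 hB HV => HV1 i.
rewrite eY; have [U' [V' ->]] := HV1 i.
exists (U i + (p ^ m)%:R * U'), V'.
rewrite !expnS expn0 !natrM mulr1; ring.
Qed.
Lemma Ev_ext B F F' i : (forall a b, F a b = F' a b) -> Ev B F i = Ev B F' i.
Proof.
move=> H; rewrite /Ev /Pol; congr (_ \Po _); apply/polyP => j.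
by rewrite !coef_poly H.
Qed.

Lemma stepM N m (G M L : nat -> nat -> int) : (m < N)%N ->
  (forall i j, L i j = conv g G i j + (p ^ m)%:R * M i j) ->
  (exists H : nat -> {poly int}, forall i,
      Iin N (Ev (N * phi) L i - \sum_(c < i.+1) Ev (N * phi) g c * H (i - c)%N)) ->
  exists y : nat -> nat -> 'F_p, forall i j, (j < phi)%N -> (M i j)%:~R = conv gb y i j.
Proof.
move=> hmN hL [H hH].
set B := (N * phi)%N.
have hB : (phi <= B)%N by rewrite /B leq_pmull //; apply: leq_ltn_trans hmN.
pose D i := H i - Ev B G i.
have E1 : forall i, Iin N (\sum_(c < i.+1) Ev B g c * D (i - c)%N - (p ^ m)%:R * Ev B M i).
  move=> i.
  have eL : Ev B L i = Ev B (conv g G) i + (p ^ m)%:R * Ev B M i.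
    rewrite (@Ev_ext B L (fun a b => conv g G a b + (p ^ m)%:R * M a b) i) //.
    by rewrite EvD EvZ polyC_natr.
  have -> : \sum_(c < i.+1) Ev B g c * D (i - c)%N - (p ^ m)%:R * Ev B M i =
     - (Ev B L i - \sum_(c < i.+1) Ev B g c * H (i - c)%N) +
     (Ev B (conv g G) i - \sum_(c < i.+1) Ev B g c * Ev B G (i - c)%N).
    rewrite /D; under eq_bigr do rewrite mulrBr.
    rewrite sumrB eL; ring.
  by apply: IinD; [apply: IinN; apply: hH | apply: EvM].
have E2 : forall i, Iin m (\sum_(c < i.+1) Ev B g c * D (i - c)%N).
  move=> i; rewrite -(subrK ((p ^ m)%:R * Ev B M i) (\sum_(c < i.+1) Ev B g c * D (i - c)%N)).
  apply: IinD; last exact: Iinp.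
  by apply: (Iin_le (ltnW hmN)); apply: E1.
have [U [V eD]] := Iin_fun (nzd hB E2).
have E3 : forall i, Iin 1 (\sum_(c < i.+1) Ev B g c * V (i - c)%N - Ev B M i).
  move=> i; apply: (@Iin_le _ _ 1 (N - m)); first by rewrite subn_gt0.
  apply: (@Iin_cancel p k hp m); rewrite subnKC ?(ltnW hmN) //.
  have -> : (p ^ m)%:R * (\sum_(c < i.+1) Ev B g c * V (i - c)%N - Ev B M i) =
    (\sum_(c < i.+1) Ev B g c * D (i - c)%N - (p ^ m)%:R * Ev B M i) -
    Phi * \sum_(c < i.+1) Ev B g c * U (i - c)%N.
    rewrite mulrBr !mulr_sumr.
    have -> : \sum_(c < i.+1) Ev B g c * D (i - c)%N =
       \sum_(c < i.+1) (Phi * (Ev B g c * U (i - c)%N) + (p ^ m)%:R * (Ev B g c * V (i - c)%N)).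
      by apply: eq_bigr => c _; rewrite eD; ring.
    rewrite big_split /=; ring.
  by apply: IinB => //; apply: IinPhi.
exists (fun a b => (mF (V a \Po ('X + 1)))`_b) => i j hj.
have := bridgeF hp (E3 i) hj.
rewrite comp_polyB rmorphB coefB (@transfer B V i j) ?EvX1; last by apply: leq_trans hB.
rewrite coef_map /= /Pol coef_poly ifT; last by apply: leq_trans hB.
by move/eqP; rewrite subr_eq0 => /eqP ->.
Qed.
End Core.

Lemma conv_intr (S : comNzRingType) (f g : nat -> nat -> int) i j :
  (conv f g i j)%:~R = conv (fun a b => (f a b)%:~R) (fun a b => (g a b)%:~R) i j :> S.
Proof.
rewrite /conv rmorph_sum; apply: eq_bigr => a _; rewrite rmorph_sum.
by apply: eq_bigr => b _; rewrite rmorphM.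
Qed.

Section Level.
Variables (p N : nat).
Hypothesis hp : prime p.
Hypothesis hN : (0 < N)%N.
Variable g : nat -> nat -> int.
Local Notation gb := (fun a b => ((g a b)%:~R : 'F_p)).
Hypothesis hg0 : exists d, gb d 0%N != 0.

Lemma dvd_Fp (z : int) : ((z%:~R : 'F_p) == 0) = (p%:Z %| z)%Z.
Proof. by rewrite (Zint_eq0 (hpd hp)) (pdiv_id hp). Qed.

Lemma phi_ge K : (K <= phi p K)%N.
Proof.
apply: ltnW; apply: (leq_trans (ltn_expl K (prime_gt1 hp))).
rewrite /phi leq_pmull //; have := prime_gt1 hp; case: (p) => [|[|q]] //.
Qed.

Lemma level_core L :
  (forall k, exists H : nat -> {poly int}, forall i,
      Iin p k N (Ev (N * phi p k) L i - \sum_(c < i.+1) Ev (N * phi p k) g c * H (i - c)%N)) ->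
  exists G, forall i j, ((p ^ N)%:Z %| L i j - conv g G i j)%Z.
Proof.
move=> Hk.
suff: forall m, (m <= N)%N -> exists G, forall i j, ((p ^ m)%:Z %| L i j - conv g G i j)%Z.
  by apply.
elim=> [_|m IH hm].
  by exists (fun _ _ => 0) => i j; rewrite expn0 dvd1z.
have [G hG] := IH (ltnW hm).
pose M i j := ((L i j - conv g G i j) %/ (p ^ m)%:Z)%Z.
have hL : forall i j, L i j = conv g G i j + (p ^ m)%:R * M i j.
  by move=> i j; rewrite /M natz mulrC divzK ?hG //; ring.
have Hy : forall K, exists y, forall i j, (j < K)%N ->
    (fun a b => ((M a b)%:~R : 'F_p)) i j = conv gb y i j.
  move=> K; have [y hy] := stepM hp hg0 hm hL (Hk K).
  by exists y => i j hj; apply: hy; apply: leq_trans hj (phi_ge K).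
have [y hy] := level0 hg0 Hy.
pose G' a b := toI (y a b).
exists (fun a b => G a b + (p ^ m)%:R * G' a b) => i j.
have -> : L i j - conv g (fun a b => G a b + (p ^ m)%:R * G' a b) i j =
          (p ^ m)%:R * (M i j - conv g G' i j).
  by rewrite convD convZ hL; ring.
have hd : (p%:Z %| M i j - conv g G' i j)%Z.
  rewrite -dvd_Fp rmorphB /= conv_intr hy.
  rewrite (@conv_ext _ _ _ y) ?subrr // => a b _ _.
  by rewrite /G' toIK.
by rewrite expnS PoszM mulrC natz dvdz_mul.
Qed.

Lemma uniq_core X : (forall i j, ((p ^ N)%:Z %| conv g X i j)%Z) ->
  forall i j, ((p ^ N)%:Z %| X i j)%Z.
Proof.
move=> HX.
suff: forall m, (m <= N)%N -> forall i j, ((p ^ m)%:Z %| X i j)%Z by apply.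
elim=> [_|m IH hm] i j; first by rewrite expn0 dvd1z.
pose X' a b := (X a b %/ (p ^ m)%:Z)%Z.
have eX : forall a b, X a b = (p ^ m)%:R * X' a b.
  by move=> a b; rewrite /X' natz mulrC divzK // IH // ltnW.
have hc : forall i j, (p%:Z %| conv g X' i j)%Z.
  move=> i' j'; have := HX i' j'.
  rewrite (@conv_ext _ _ _ (fun a b => (p ^ m)%:R * X' a b)) // convZ.
  rewrite -(subnKC (ltnW hm)) expnD PoszM natz dvdz_mul2l; last first.
    by rewrite -natz pnatr_eq0 expn_eq0 negb_and -lt0n prime_gt0.
  move/(dvdz_trans _); apply.
  by rewrite unfold_in /= dvdn_exp ?subn_gt0.
have h0 : ((X' i j)%:~R : 'F_p) = 0.
  apply: (conv_dom (g := gb) (y := fun a b => ((X' a b)%:~R : 'F_p)) (K := j.+1) hg0) => //.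
  by move=> i' j' _; rewrite -conv_intr; apply/eqP; rewrite dvd_Fp.
move/eqP: h0; rewrite dvd_Fp => h0.
by rewrite eX expnS PoszM mulrC natz dvdz_mul.
Qed.
End Level.

Section Final.
Variable p : nat.
Hypothesis hp : prime p.

Lemma hq n : (1 < p ^ n.+1)%N.
Proof. by rewrite -[1%N](expn0 p) ltn_exp2l ?prime_gt1. Qed.

Local Notation toIn n := (@toI (p ^ n.+1)).

Lemma dvd_pow a b (z : int) : (a <= b)%N -> ((p ^ b)%:Z %| z)%Z -> ((p ^ a)%:Z %| z)%Z.
Proof.
move=> hab; apply: dvdz_trans.
by rewrite unfold_in /= dvdn_exp2l.
Qed.

Lemma zp_red_toI n (a : 'Z_(p ^ n.+2)) : zp_red a = (toI a)%:~R.
Proof. by rewrite /zp_red /toI -Zp_nat -pmulrn. Qed.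

Lemma zp_red_intr n (z : int) : zp_red ((z%:~R : 'Z_(p ^ n.+2))) = (z%:~R : 'Z_(p ^ n.+1)).
Proof.
rewrite zp_red_toI; apply/(Zint_eq (hq n)).
apply: (@dvd_pow n.+1 n.+2); first exact: leqnSn.
by apply/(Zint_eq (hq n.+1)); rewrite toIK.
Qed.

Lemma red_cong (F : ps2 p) : ps2_compat F -> forall n i j,
  ((toI (F n.+1 i j))%:~R : 'Z_(p ^ n.+1)) = F n i j.
Proof. by move=> hF n i j; rewrite -zp_red_toI hF. Qed.

Lemma red_cong0 (F : ps2 p) : ps2_compat F -> forall n i j,
  ((toI (F n i j))%:~R : 'F_p) = (toI (F 0%N i j))%:~R.
Proof.
move=> hF; elim=> [//|n IH] i j; rewrite -IH.
apply/(Zint_eq (hpd hp)); rewrite (pdiv_id hp).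
apply: (@dvd_pow 1 n.+1) => //.
apply/(Zint_eq (hq n)); rewrite red_cong // toIK //.
Qed.

Lemma cyclo_map n k : cyclo_pk p k.+1 n = map_poly (intr : int -> 'Z_(p ^ n.+1)) (Phi p k).
Proof. by rewrite /cyclo_pk /Phi rmorph_sum /=; apply: eq_bigr => i _; rewrite map_polyXn. Qed.

Lemma poly_comp_sum (R : comNzRingType) B (c : nat -> R) (q : {poly R}) :
  (\poly_(j < B) c j) \Po q = \sum_(j < B) (c j)%:P * q ^+ j.
Proof.
rewrite poly_def (raddf_sum (comp_poly q)) /=; apply: eq_bigr => j _.
by rewrite comp_polyZ rmorphXn /= comp_polyX mul_polyC.
Qed.

Lemma eval_map n k (F : ps2 p) i :
  @eval_psi p k.+1 1 F n i =
  map_poly (intr : int -> 'Z_(p ^ n.+1))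
    (Ev (n.+1 * phi p k) (fun a b => toI (F n a b)) i).
Proof.
rewrite /eval_psi /Ev /Pol map_comp_poly /= rmorphB /= map_polyX rmorph1.
rewrite (totient_pfactor hp) //= -/(phi p k).
have -> : map_poly (intr : int -> 'Z_(p ^ n.+1)) (\poly_(j < n.+1 * phi p k) toIn n (F n i j))
   = \poly_(j < n.+1 * phi p k) F n i j.
  apply/polyP => j; rewrite coef_map !coef_poly; case: ifP => _ //.
  exact: toIK.
by rewrite poly_comp_sum expr1.
Qed.

Lemma hyp_trans (g L : ps2 p)
  (hpsi : forall k a : nat, coprime a p ->
              ops_dvd k (@eval_psi p k a g) (@eval_psi p k a L)) n k :
  exists H : nat -> {poly int}, forall i,
    Iin p k n.+1 (Ev (n.+1 * phi p k) (fun a b => toI (L n a b)) i -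
      \sum_(c < i.+1) Ev (n.+1 * phi p k) (fun a b => toI (g n a b)) c * H (i - c)%N).
Proof.
have [Hz [_ hH]] := hpsi k.+1 1%N (coprime1n p).
exists (fun i => liftP (Hz n i)) => i.
have [q hq'] := hH n i.
set A := _ - _.
have : map_poly (intr : int -> 'Z_(p ^ n.+1)) (A - liftP q * Phi p k) = 0.
  rewrite rmorphB rmorphM /= liftPK // -cyclo_map -hq' /A rmorphB /= -eval_map.
  rewrite rmorph_sum /= /ops_mul; apply/eqP; rewrite subr_eq0; apply/eqP.
  congr (_ - _); apply: eq_bigr => c _; rewrite rmorphM /= -eval_map liftPK //.
move/(ker_map (hq n)) => [R hR].
exists (liftP q), R.
by move/eqP: hR; rewrite subr_eq => /eqP ->; rewrite addrC.
Qed.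
End Final.

Theorem theorem4p1 (p : nat) (hp : prime p) (hodd : odd p)
    (g L : ps2 p) (hg : ps2_compat g) (hL : ps2_compat L)
    (hg0 : exists i : nat, g 0%N i 0%N != 0)
    (hpsi : forall k a : nat, coprime a p ->
              ops_dvd k (@eval_psi p k a g) (@eval_psi p k a L)) :
  ps2_dvd g L.
Proof.
pose gI n a b := toI (g n a b).
pose LI n a b := toI (L n a b).
have hg0' : forall n, exists d, ((gI n d 0%N)%:~R : 'F_p) != 0.
  move=> n; case: hg0 => d hd; exists d.
  rewrite /gI (red_cong0 hp hg); apply: contra hd.
  rewrite (dvd_Fp hp) => hdv; apply/eqP.
  rewrite -(toIK (g 0%N d 0%N)); apply/eqP; rewrite (Zint_eq0 (hq hp 0)).
  have -> : ((p ^ 1)%N)%:Z = p%:Z by rewrite expn1.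
  exact: hdv.
have hcore : forall n, exists G, forall i j,
    ((p ^ n.+1)%:Z %| LI n i j - conv (gI n) G i j)%Z.
  move=> n; apply: (@level_core p n.+1 hp (gI n) (hg0' n) (LI n)) => k.
  exact: (hyp_trans hp hpsi n k).
have [Gf hGf] := fchoice hcore.
have eqn : forall n i j, L n i j = conv (g n) (fun a b => ((Gf n a b)%:~R : 'Z_(p ^ n.+1))) i j.
  move=> n i j.
  have e := proj2 (Zint_eq (hq hp n) _ _) (hGf n i j).
  rewrite -(toIK (L n i j)) -/(LI n i j) e conv_intr.
  by apply: conv_extl => a b _ _; rewrite /gI toIK.
exists (fun n a b => ((Gf n a b)%:~R : 'Z_(p ^ n.+1))); split; last first.
  by move=> n i j; rewrite eqn.
move=> n i j; rewrite zp_red_intr //.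
apply/(Zint_eq (hq hp n)).
apply: (@uniq_core p n.+1 hp (gI n) (hg0' n) (fun a b => Gf n.+1 a b - Gf n a b)) => i' j'.
rewrite -(Zint_eq0 (hq hp n)) convB rmorphB /= !conv_intr.
rewrite subr_eq0; apply/eqP.
have e1 : conv (fun a b => ((gI n a b)%:~R : 'Z_(p ^ n.+1))) (fun a b => (Gf n a b)%:~R) i' j' = L n i' j'.
  by rewrite eqn; apply: conv_extl => a b _ _; rewrite /gI toIK.
have e2 := proj2 (Zint_eq (hq hp n) _ _)
   (dvd_pow (leqnSn n.+1) (hGf n.+1 i' j')).
rewrite e1 -(red_cong hL) -/(LI n.+1 i' j') e2 conv_intr.
by apply: conv_extl => a b _ _; rewrite /gI (red_cong hg) toIK.
Qed.
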